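(* Let $\kappa$ be a regular cardinal. There is a $(\kappa,\kappa^+)$-Borel set $R\subseteq\kappa^\kappa\times\kappa^\kappa$ which is universal for the $\kappa$-Borel sets, i.e. for every $\kappa$-Borel $A\subseteq\kappa^\kappa$ there is $\xi\in\kappa^\kappa$ such that for all $\eta\in\kappa^\kappa$: $\eta\in A$ if and only if $(\eta,\xi)\in R$.
   Context: For $X\subseteq\kappa$ with $|X|<\kappa$ and $\eta:X\to\kappa$, let $N_\eta=\{\zeta\in\kappa^\kappa\mid\eta\subseteq\zeta\}$; these sets and $\emptyset$ are the basic $\kappa$-open subsets of $\kappa^\kappa$, and the basic $\kappa$-open subsets of $\kappa^\kappa\times\kappa^\kappa$ are the products $N_\eta\times N_\xi$ of basic $\kappa$-open sets. For a cardinal $\lambda$, the $(\kappa,\lambda)$-Borel sets form the smallest class containing the basic $\kappa$-open sets and closed under complements, unions of at most $\lambda$ sets and intersections of at most $\lambda$ sets; $\kappa$-Borel means $(\kappa,\kappa)$-Borel. *)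

(* Defs.v *)
From Stdlib Require Import Classical.
Set Implicit Arguments.

Definition inj {A B : Type} (f : A -> B) : Prop := forall x y, f x = f y -> x = y.

(* |X| < |K| for a subset X of K (K well-ordered, so |X| <= |K| always):
   there is no injection of K into X. *)
Definition small (K : Type) (X : K -> Prop) : Prop :=
  ~ exists f : K -> {x : K | X x}, inj f.

(* (K, lt) represents a regular cardinal kappa: a strict well-order that is
   an initial ordinal (every proper initial segment has smaller cardinality),
   is infinite, and every subset of size < kappa is bounded. *)
Record regular_cardinal (K : Type) (lt : K -> K -> Prop) : Prop := {
  rc_wf       : well_founded lt;
  rc_trans    : forall x y z, lt x y -> lt y z -> lt x z;
  rc_total    : forall x y, lt x y \/ x = y \/ lt y x;
  rc_infinite : exists f : nat -> K, inj f;
  rc_initial  : forall b : K, ~ exists f : K -> {x : K | lt x b}, inj f;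
  rc_regular  : forall X : K -> Prop, small X -> exists b, forall x, X x -> lt x b
}.

Definition size_le_kappa (K : Type) (I : Type) : Prop :=
  exists f : I -> K, inj f.

(* index types of cardinality at most kappa^+ : they carry a well-order all of
   whose proper initial segments have cardinality at most kappa *)
Definition size_le_kappa_plus (K : Type) (I : Type) : Prop :=
  exists r : I -> I -> Prop,
    well_founded r /\
    (forall x y z, r x y -> r y z -> r x z) /\
    (forall x y, r x y \/ x = y \/ r y x) /\
    (forall i, exists f : {j : I | r j i} -> K, inj f).

(* basic kappa-open subsets of kappa^kappa: the empty set and the sets
   N_eta = {zeta | eta ⊆ zeta} for eta : X -> kappa with |X| < kappa
   (eta is represented by a total function whose values off X are ignored). *)
Definition basic_open (K : Type) (A : (K -> K) -> Prop) : Prop :=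
  (forall z, ~ A z) \/
  exists (X : K -> Prop) (eta : K -> K),
    small X /\ forall zeta, A zeta <-> (forall x, X x -> zeta x = eta x).

Definition basic_open2 (K : Type) (A : (K -> K) * (K -> K) -> Prop) : Prop :=
  exists U V, basic_open U /\ basic_open V /\
    forall p, A p <-> (U (fst p) /\ V (snd p)).

Inductive borel (S : Type) (basic : (S -> Prop) -> Prop) (sz : Type -> Prop)
  : (S -> Prop) -> Prop :=
| borel_basic A : basic A -> borel basic sz A
| borel_ext A B : borel basic sz A -> (forall s, A s <-> B s) -> borel basic sz B
| borel_compl A : borel basic sz A -> borel basic sz (fun s => ~ A s)
| borel_union (I : Type) (F : I -> S -> Prop) :
    sz I -> (forall i, borel basic sz (F i)) ->
    borel basic sz (fun s => exists i, F i s)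
| borel_inter (I : Type) (F : I -> S -> Prop) :
    sz I -> (forall i, borel basic sz (F i)) ->
    borel basic sz (fun s => forall i, F i s).

Definition kappa_borel (K : Type) (A : (K -> K) -> Prop) : Prop :=
  borel (@basic_open K) (size_le_kappa K) A.

Definition kappa_kappa_plus_borel2 (K : Type) (R : (K -> K) * (K -> K) -> Prop) : Prop :=
  borel (@basic_open2 K) (size_le_kappa_plus K) R.

(* Main.v *)
Require Import Defs.
From Stdlib Require Import Classical ClassicalEpsilon FunctionalExtensionality PropExtensionality ProofIrrelevance Lia Wellfounded Arith PeanoNat.


Definition injP {X Y : Type} (A : X -> Prop) (B : Y -> Prop) : Prop :=
  exists f : X -> Y, (forall x, A x -> B (f x)) /\
    (forall x y, A x -> A y -> f x = f y -> x = y).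

Lemma injP_trans {X Y Z : Type} (A : X -> Prop) (B : Y -> Prop) (C : Z -> Prop) :
  injP A B -> injP B C -> injP A C.
Proof.
  intros [f [f1 f2]] [g [g1 g2]]. exists (fun x => g (f x)). split.
  - intros; auto.
  - intros x y Hx Hy E. apply f2; auto.
Qed.

Lemma injP_mono {X Y : Type} (A A' : X -> Prop) (B B' : Y -> Prop) :
  (forall x, A' x -> A x) -> (forall y, B y -> B' y) -> injP A B -> injP A' B'.
Proof.
  intros HA HB [f [f1 f2]]. exists f. split; auto.
Qed.

Lemma injP_prod {X Y X' Y' : Type} (A : X -> Prop) (B : Y -> Prop) (A' : X' -> Prop) (B' : Y' -> Prop) :
  injP A A' -> injP B B' ->
  injP (fun p => A (fst p) /\ B (snd p)) (fun p => A' (fst p) /\ B' (snd p)).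
Proof.
  intros [f [f1 f2]] [g [g1 g2]]. exists (fun p => (f (fst p), g (snd p))). split.
  - intros [x y] [H1 H2]; simpl; auto.
  - intros [x y] [x' y'] [H1 H2] [H3 H4] E; simpl in *. injection E; intros.
    f_equal; auto.
Qed.

Definition finP {X : Type} (A : X -> Prop) := exists N, injP A (fun k : nat => k < N).
Definition infP {X : Type} (A : X -> Prop) := injP (fun _ : nat => True) A.

Lemma php : forall N (f : nat -> nat), (forall i, f i < N) ->
  (forall i j, f i = f j -> i = j) -> False.
Proof.
  induction N; intros f Hb Hi.
  - specialize (Hb 0). lia.
  - destruct (classic (exists i0, f i0 = N)) as [[i0 Hi0]|Hn].
    + apply (IHN (fun i => if lt_dec i i0 then f i else f (S i))).
      * intros i. destruct (lt_dec i i0) as [E|E].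
        -- assert (f i <> N). { intros C. rewrite <- Hi0 in C. apply Hi in C. lia. }
           specialize (Hb i). lia.
        -- assert (f (S i) <> N). { intros C. rewrite <- Hi0 in C. apply Hi in C. lia. }
           specialize (Hb (S i)). lia.
      * intros i j. destruct (lt_dec i i0) as [E1|E1], (lt_dec j i0) as [E2|E2];
        intros E; apply Hi in E; lia.
    + apply (IHN f); auto. intros i. specialize (Hb i).
      assert (f i <> N) by (intro C; apply Hn; eauto). lia.
Qed.

Lemma fin_inf {X : Type} (A : X -> Prop) : finP A -> infP A -> False.
Proof.
  intros [N HN] Hi. destruct (injP_trans _ _ _ Hi HN) as [f [f1 f2]].
  apply (php N f); auto.
Qed.

Lemma fin_prod {X Y : Type} (A : X -> Prop) (B : Y -> Prop) :
  finP A -> finP B -> finP (fun p => A (fst p) /\ B (snd p)).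
Proof.
  intros [N [f [f1 f2]]] [M [g [g1 g2]]]. exists (N * M).
  exists (fun p => f (fst p) * M + g (snd p)). split.
  - intros [x y] [H1 H2]; simpl in *. specialize (f1 x H1). specialize (g1 y H2). nia.
  - intros [x y] [x' y'] [H1 H2] [H3 H4] E; simpl in *.
    pose proof (g1 _ H4) as G4. pose proof (g1 _ H2) as G2.
    assert (f x = f x') by nia. assert (g y = g y') by nia. f_equal; auto.
Qed.

Lemma absorb {X Y : Type} (A : X -> Prop) (B : Y -> Prop) (c : X) (h : nat -> Y) :
  (forall k, B (h k)) -> inj h -> injP A B -> injP (fun x => A x \/ x = c) B.
Proof.
  intros Hh hinj [f [f1 f2]].
  set (idx := fun y => epsilon (inhabits 0) (fun k => y = h k)).
  assert (Hidx : forall y k, y = h k -> y = h (idx y)).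
  { intros y k E. unfold idx. apply (epsilon_spec _ (fun k => y = h k)). eauto. }
  exists (fun x => if excluded_middle_informative (x = c) then h 0 else
            if excluded_middle_informative (exists k, f x = h k) then h (S (idx (f x))) else f x).
  split.
  - intros x Hx. destruct excluded_middle_informative; auto.
    destruct excluded_middle_informative; auto. destruct Hx; [auto|contradiction].
  - intros x y Hx Hy.
    destruct (excluded_middle_informative (x = c)) as [Ex|Ex];
    destruct (excluded_middle_informative (y = c)) as [Ey|Ey]; try congruence.
    + destruct excluded_middle_informative as [[k Hk]|Hn].
      * intros E. apply hinj in E. discriminate.
      * intros E. exfalso. apply Hn. exists 0. auto.
    + destruct excluded_middle_informative as [[k Hk]|Hn].
      * intros E. apply hinj in E. discriminate.
      * intros E. exfalso. apply Hn. exists 0. auto.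
    + assert (Ax : A x) by (destruct Hx; [auto|contradiction]).
      assert (Ay : A y) by (destruct Hy; [auto|contradiction]).
      destruct (excluded_middle_informative (exists k, f x = h k)) as [[k1 H1]|N1];
      destruct (excluded_middle_informative (exists k, f y = h k)) as [[k2 H2]|N2].
      * intros E. apply hinj in E. injection E; intros E'.
        apply f2; auto. rewrite (Hidx _ _ H1), (Hidx _ _ H2), E'. reflexivity.
      * intros E. exfalso. apply N2. eauto.
      * intros E. exfalso. apply N1. eauto.
      * intros E. apply f2; auto.
Qed.

Lemma fin_add_point {X : Type} (A : X -> Prop) (c : X) :
  finP A -> finP (fun x => A x \/ x = c).
Proof.
  intros [N [f [f1 f2]]]. exists (S N).
  exists (fun x => if excluded_middle_informative (x = c) then N else f x). split.
  - intros x Hx. destruct excluded_middle_informative; [lia|].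
    destruct Hx; [specialize (f1 _ H); lia | contradiction].
  - intros x y Hx Hy.
    destruct (excluded_middle_informative (x = c)) as [Ex|Ex];
    destruct (excluded_middle_informative (y = c)) as [Ey|Ey]; try congruence.
    + intros E. assert (Ay : A y) by (destruct Hy; [auto|contradiction]).
      specialize (f1 _ Ay). lia.
    + intros E. assert (Ax : A x) by (destruct Hx; [auto|contradiction]).
      specialize (f1 _ Ax). lia.
    + intros E. apply f2; auto.
      destruct Hx; [auto|contradiction]. destruct Hy; [auto|contradiction].
Qed.

Lemma embed {W Y : Type} (r : W -> W -> Prop) (Hwf : well_founded r)
  (Htot : forall x y, r x y \/ x = y \/ r y x)
  (A : W -> Prop) (P : Y -> Prop) (y0 : Y) :
  (forall w, A w -> ~ injP P (fun w' => A w' /\ r w' w)) -> injP A P.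
Proof.
  intros H.
  set (F := fun (w : W) (f : forall w', r w' w -> Y) =>
    epsilon (inhabits y0) (fun x => P x /\ forall w' (Hr : r w' w), A w' -> f w' Hr <> x)).
  set (g := Fix Hwf (fun _ => Y) F).
  assert (Hg : forall w, g w = epsilon (inhabits y0)
            (fun x => P x /\ forall w' (Hr : r w' w), A w' -> g w' <> x)).
  { intros w. unfold g. rewrite Fix_eq. reflexivity.
    intros x f1 f2 Hf. assert (f1 = f2).
    { apply functional_extensionality_dep; intros y.
      apply functional_extensionality_dep; intros p. auto. }
    subst. reflexivity. }
  assert (Hspec : forall w, A w -> P (g w) /\ forall w', r w' w -> A w' -> g w' <> g w).
  { intros w Aw. rewrite (Hg w).
    pose proof (epsilon_spec (inhabits y0)
      (fun x => P x /\ forall w' (Hr : r w' w), A w' -> g w' <> x)) as Hs.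
    assert (Hex : exists x, P x /\ forall w' (Hr : r w' w), A w' -> g w' <> x).
    { apply NNPP. intros Hn. apply (H w Aw).
      exists (fun x => epsilon (inhabits w) (fun w' => r w' w /\ A w' /\ g w' = x)).
      assert (Hc : forall x, P x -> exists w', r w' w /\ A w' /\ g w' = x).
      { intros x Px. apply NNPP. intros Hn2. apply Hn. exists x. split; auto.
        intros w' Hr Aw' E. apply Hn2. eauto. }
      split.
      - intros x Px. pose proof (epsilon_spec (inhabits w) _ (Hc x Px)) as [Z1 [Z2 Z3]]. auto.
      - intros x y Px Py E.
        pose proof (epsilon_spec (inhabits w) _ (Hc x Px)) as [Z1 [Z2 Z3]].
        pose proof (epsilon_spec (inhabits w) _ (Hc y Py)) as [U1 [U2 U3]].
        rewrite <- Z3, <- U3, E. reflexivity. }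
    specialize (Hs Hex). destruct Hs as [Hs1 Hs2]. split; [auto|].
    intros w' Hr Aw'. apply (Hs2 w' Hr Aw'). }
  exists g. split.
  - intros w Aw. apply (Hspec w Aw).
  - intros x y Ax Ay E. destruct (Htot x y) as [Hr|[Hr|Hr]]; auto.
    + exfalso. apply (proj2 (Hspec y Ay) x Hr Ax E).
    + exfalso. apply (proj2 (Hspec x Ax) y Hr Ay). auto.
Qed.


Section Pair.
Variables (K : Type) (lt : K -> K -> Prop) (HK : regular_cardinal lt).

Let wf := rc_wf HK.
Let trans := rc_trans HK.
Let tot := rc_total HK.

Lemma lt_irrefl x : ~ lt x x.
Proof.
  induction x as [x IH] using (well_founded_ind wf). intros H. exact (IH x H H).
Qed.

Lemma min_exists (Q : K -> Prop) : (exists x, Q x) -> exists c, Q c /\ forall c', lt c' c -> ~ Q c'.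
Proof.
  intros [x Qx]. apply NNPP. intros Hn. revert Qx.
  induction x as [y IH] using (well_founded_ind wf). intros Qy. apply Hn. exists y.
  split; [exact Qy|]. intros c' Hc' Qc'. exact (IH c' Hc' Qc').
Qed.

Definition Sg (m : K) := fun x => lt x m.
Definition Tg (m : K) := fun x => lt x m \/ x = m.

Lemma dich m : finP (Sg m) \/ infP (Sg m).
Proof.
  induction m as [m IH] using (well_founded_ind wf).
  destruct (classic (exists x, lt x m)) as [[x0 Hx0]|Hemp].
  2:{ left. exists 0. exists (fun _ => 0). split.
      - intros x Hx. exfalso. apply Hemp. eauto.
      - intros x y Hx. exfalso. apply Hemp. eauto. }
  destruct (classic (exists p, lt p m /\ forall x, lt x m -> lt x p \/ x = p)) as [[p [Hp Hmax]]|Hnomax].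
  - destruct (IH p Hp) as [Hf|Hi].
    + left. destruct (fin_add_point _ p Hf) as [N HN]. exists N.
      eapply injP_mono; [|intros y Hy; exact Hy|exact HN]. simpl. intros x Hx. apply Hmax; auto.
    + right. eapply injP_mono; [intros; exact I| |exact Hi]. intros y Hy. unfold Sg in *. eauto.
  - right.
    assert (Hnext : forall x, lt x m -> exists y, lt y m /\ lt x y).
    { intros x Hx. apply NNPP. intros Hn. apply Hnomax. exists x. split; auto.
      intros y Hy. destruct (tot y x) as [H|[H|H]]; auto. exfalso. apply Hn. eauto. }
    set (nx := fun x => epsilon (inhabits x0) (fun y => lt y m /\ lt x y)).
    assert (Hnx : forall x, lt x m -> lt (nx x) m /\ lt x (nx x)).
    { intros x Hx. apply (epsilon_spec _ (fun y => lt y m /\ lt x y)). auto. }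
    set (sq := fix sq (k : nat) := match k with 0 => x0 | S k => nx (sq k) end).
    assert (Hin : forall k, lt (sq k) m).
    { induction k; simpl; auto. apply Hnx; auto. }
    assert (Hinc : forall i j, i < j -> lt (sq i) (sq j)).
    { intros i j Hij. induction Hij.
      - simpl. apply Hnx; auto.
      - simpl. eapply trans; [exact IHHij|]. apply Hnx; auto. }
    exists sq. split; [intros; apply Hin|].
    intros i j _ _ E. destruct (lt_eq_lt_dec i j) as [[H|H]|H]; auto.
    + apply Hinc in H. rewrite E in H. exfalso; apply (lt_irrefl _ H).
    + apply Hinc in H. rewrite E in H. exfalso; apply (lt_irrefl _ H).
Qed.

Definition mx (a b : K) := if excluded_middle_informative (lt a b) then b else a.

Lemma mx_ge_l a b : lt a (mx a b) \/ a = mx a b.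
Proof. unfold mx. destruct excluded_middle_informative; auto. Qed.

Lemma mx_ge_r a b : lt b (mx a b) \/ b = mx a b.
Proof.
  unfold mx. destruct excluded_middle_informative; auto.
  destruct (tot a b) as [H|[H|H]]; auto. contradiction.
Qed.

Lemma mx_cases a b : mx a b = a \/ mx a b = b.
Proof. unfold mx. destruct excluded_middle_informative; auto. Qed.

Definition god (p q : K * K) :=
  lt (mx (fst p) (snd p)) (mx (fst q) (snd q)) \/
  (mx (fst p) (snd p) = mx (fst q) (snd q) /\
   (lt (fst p) (fst q) \/ (fst p = fst q /\ lt (snd p) (snd q)))).

Lemma god_wf : well_founded god.
Proof.
  intros [a b]. remember (mx a b) as m eqn:Hm. revert a b Hm.
  induction m as [m IHm] using (well_founded_ind wf).
  intros a. induction a as [a IHa] using (well_founded_ind wf).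
  intros b. induction b as [b IHb] using (well_founded_ind wf).
  intros Hm. constructor. intros [c d] H. unfold god in H; simpl in H.
  destruct H as [H|[H1 [H2|[H2 H3]]]].
  - rewrite <- Hm in H. eapply IHm; eauto.
  - eapply IHa; eauto. rewrite H1; auto.
  - subst c. eapply IHb; eauto. rewrite H1; auto.
Qed.

Lemma god_tot : forall p q, god p q \/ p = q \/ god q p.
Proof.
  intros [a b] [c d]. unfold god; simpl.
  destruct (tot (mx a b) (mx c d)) as [H|[H|H]]; auto.
  destruct (tot a c) as [H1|[H1|H1]]; auto 6.
  subst c. destruct (tot b d) as [H2|[H2|H2]]; subst; auto 7.
Qed.

Lemma le_trans x y z : (lt x y \/ x = y) -> (lt y z \/ y = z) -> lt x z \/ x = z.
Proof. intros [H|H] [H'|H']; subst; eauto. Qed.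

Lemma god_below p q : god p q -> Tg (mx (fst q) (snd q)) (fst p) /\ Tg (mx (fst q) (snd q)) (snd p).
Proof.
  intros H. assert (Hle : lt (mx (fst p) (snd p)) (mx (fst q) (snd q)) \/
                          mx (fst p) (snd p) = mx (fst q) (snd q)).
  { destruct H as [H|[H _]]; auto. }
  split; unfold Tg.
  - apply (le_trans _ (mx (fst p) (snd p))); [apply mx_ge_l|exact Hle].
  - apply (le_trans _ (mx (fst p) (snd p))); [apply mx_ge_r|exact Hle].
Qed.

Lemma mx_lt a b m : lt a m -> lt b m -> lt (mx a b) m.
Proof. intros. destruct (mx_cases a b) as [E|E]; rewrite E; auto. Qed.

Lemma inf_T g : infP (Sg g) -> injP (Tg g) (Sg g).
Proof.
  intros [h [h1 h2]].
  apply (absorb (Sg g) (Sg g) g h); auto.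
  - intros x y E. apply h2; auto.
  - exists (fun x => x). split; auto.
Qed.

Lemma fin_T g : finP (Sg g) -> finP (Tg g).
Proof. intros H. apply (fin_add_point _ g H). Qed.

Definition SS m := fun p : K * K => Sg m (fst p) /\ Sg m (snd p).
Definition TT m := fun p : K * K => Tg m (fst p) /\ Tg m (snd p).

Lemma hess m : finP (Sg m) \/ injP (SS m) (Sg m).
Proof.
  induction m as [m IH] using (well_founded_ind wf).
  destruct (dich m) as [Hf|Hi]; [left; auto|right].
  destruct (min_exists (fun c => (lt c m \/ c = m) /\ injP (Sg m) (Sg c)))
    as [c [[Hcm Hc] Hmin]].
  { exists m. split; auto. exists (fun x => x). split; auto. }
  destruct Hcm as [Hcm|Hcm].
  - destruct (IH c Hcm) as [Hf|Hcc].
    + exfalso. apply (fin_inf _ Hf). eapply injP_trans; eauto.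
    + eapply injP_trans. { apply (injP_prod _ _ _ _ Hc Hc). }
      eapply injP_trans. { exact Hcc. }
      exists (fun x => x). split; auto. intros x Hx. unfold Sg in *. eauto.
  - subst c.
    assert (Hmin' : forall c', lt c' m -> ~ injP (Sg m) (Sg c')).
    { intros c' Hc' Hinj. apply (Hmin c' Hc'). auto. }
    apply (embed god god_wf god_tot (SS m) (Sg m) m).
    intros [a b] [Ha Hb] Hinj. simpl in *.
    set (g := mx a b). assert (Hg : lt g m) by (apply mx_lt; auto).
    assert (H1 : injP (Sg m) (TT g)).
    { eapply injP_mono; [intros; eauto| |exact Hinj].
      intros y [_ Hy]. apply god_below in Hy. exact Hy. }
    destruct (dich g) as [Hgf|Hgi].
    + apply (fin_inf (Sg m)); auto.
      destruct (fin_prod _ _ (fin_T _ Hgf) (fin_T _ Hgf)) as [N HN].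
      exists N. eapply injP_trans; eauto.
    + destruct (IH g Hg) as [Hgf|Hgg].
      * exact (fin_inf _ Hgf Hgi).
      * apply (Hmin' g Hg). eapply injP_trans; [exact H1|].
        eapply injP_trans; [apply (injP_prod _ _ _ _ (inf_T _ Hgi) (inf_T _ Hgi))|].
        exact Hgg.
Qed.

Lemma pairing : exists pi : K -> K -> K, forall a b c d, pi a b = pi c d -> a = c /\ b = d.
Proof.
  destruct (rc_infinite HK) as [h hinj].
  assert (Hp : injP (fun _ : K * K => True) (fun _ : K => True)).
  { apply (embed god god_wf god_tot _ _ (h 0)).
    intros [a b] _ Hinj. set (g := mx a b).
    assert (H1 : injP (fun _ : K => True) (TT g)).
    { eapply injP_mono; [intros; exact I| |exact Hinj].
      intros y [_ Hy]. apply god_below in Hy. exact Hy. }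
    assert (Kinf : infP (fun _ : K => True)).
    { exists h. split; auto. }
    destruct (dich g) as [Hgf|Hgi].
    + apply (fin_inf (fun _ : K => True)); auto.
      destruct (fin_prod _ _ (fin_T _ Hgf) (fin_T _ Hgf)) as [N HN].
      exists N. eapply injP_trans; eauto.
    + destruct (hess g) as [Hgf|Hgg].
      * exact (fin_inf _ Hgf Hgi).
      * assert (H2 : injP (fun _ : K => True) (Sg g)).
        { eapply injP_trans; [exact H1|].
          eapply injP_trans; [apply (injP_prod _ _ _ _ (inf_T _ Hgi) (inf_T _ Hgi))|].
          exact Hgg. }
        destruct H2 as [f [f1 f2]]. apply (rc_initial HK g).
        exists (fun x => exist _ (f x) (f1 x I)). intros x y E.
        injection E. intros E'. apply f2; auto. }
  destruct Hp as [f [_ f2]]. exists (fun a b => f (a, b)).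
  intros a b c d E. apply f2 in E; auto. injection E; auto.
Qed.

End Pair.


Section Main.
Variables (K : Type) (lt : K -> K -> Prop) (HK : regular_cardinal lt).
Variable pi : K -> K -> K.
Hypothesis pi_inj : forall a b c d, pi a b = pi c d -> a = c /\ b = d.
Variable h : nat -> K.
Hypothesis h_inj : inj h.

Let k0 := h 0.

Inductive tree := tleaf | tsup (f : K -> tree).

Fixpoint tle (s t : tree) : Prop :=
  match s with
  | tleaf => True
  | tsup f => forall k, match t with tleaf => False | tsup g => exists j, tle (f k) (g j) end
  end.

Definition tlt (s t : tree) : Prop :=
  match t with tleaf => False | tsup g => exists j, tle s (g j) end.

Lemma tle_sup f t : tle (tsup f) t <-> forall k, tlt (f k) t.
Proof. destruct t; simpl; tauto. Qed.

Lemma tle_refl t : tle t t.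
Proof. induction t as [|f IH]; simpl; auto. intros k. exists k. auto. Qed.

Lemma tle_trans s t u : tle s t -> tle t u -> tle s u.
Proof.
  revert t u. induction s as [|f IH]; intros t u H1 H2; simpl; auto.
  intros k. specialize (H1 k). destruct t as [|g]; [contradiction|].
  destruct H1 as [j Hj]. specialize (H2 j). destruct u as [|l]; [contradiction|].
  destruct H2 as [i Hi]. exists i. eauto.
Qed.

Lemma tlt_tle s t : tlt s t -> tle s t.
Proof.
  revert t. induction s as [|f IH]; intros t H; simpl; auto.
  destruct t as [|g]; [contradiction|]. destruct H as [j Hj].
  intros k. exists j. apply IH. simpl in Hj. apply (Hj k).
Qed.

Lemma tlt_tle_trans s t u : tlt s t -> tle t u -> tlt s u.
Proof.
  intros H1 H2. destruct t as [|g]; [contradiction|]. destruct H1 as [j Hj].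
  specialize (H2 j). destruct u as [|l]; [contradiction|]. destruct H2 as [i Hi].
  exists i. eapply tle_trans; eauto.
Qed.

Lemma tle_tlt_trans s t u : tle s t -> tlt t u -> tlt s u.
Proof.
  intros H1 H2. destruct u as [|l]; [contradiction|]. destruct H2 as [i Hi].
  exists i. eapply tle_trans; eauto.
Qed.

Lemma tlt_trans s t u : tlt s t -> tlt t u -> tlt s u.
Proof. intros H1 H2. eapply tlt_tle_trans; eauto. apply tlt_tle; auto. Qed.

Lemma t_total s t : tle s t \/ tlt t s.
Proof.
  revert t. induction s as [|f IH]; intros t; [left; simpl; auto|].
  destruct (classic (forall k, tlt (f k) t)) as [Ha|Hn].
  - left. apply tle_sup. auto.
  - right. apply not_all_ex_not in Hn. destruct Hn as [k Hk].
    exists k. destruct t as [|g]; simpl; auto.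
    intros l. destruct (IH k (g l)) as [H|H]; auto.
    exfalso. apply Hk. exists l. auto.
Qed.

Lemma tlt_wf : well_founded tlt.
Proof.
  assert (H : forall t s, tle s t -> Acc tlt s).
  { induction t as [|g IH]; intros s Hs; constructor; intros y Hy.
    - pose proof (tlt_tle_trans _ _ _ Hy Hs). contradiction.
    - pose proof (tlt_tle_trans _ _ _ Hy Hs) as [j Hj]. eapply IH; eauto. }
  intros t. apply (H t). apply tle_refl.
Qed.

Definition teqv s t := tle s t /\ tle t s.

Definition canon t := epsilon (inhabits t) (fun s => teqv s t).

Lemma canon_eqv t : teqv (canon t) t.
Proof.
  unfold canon. apply (epsilon_spec _ (fun s => teqv s t)). exists t. split; apply tle_refl.
Qed.

Lemma canon_ext s t : teqv s t -> canon s = canon t.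
Proof.
  intros [H1 H2]. unfold canon.
  assert (E : (fun u => teqv u s) = (fun u => teqv u t)).
  { apply functional_extensionality; intros u. apply propositional_extensionality.
    unfold teqv; split; intros [A1 A2]; split; eapply tle_trans; eauto. }
  rewrite E. f_equal. apply proof_irrelevance.
Qed.

Lemma canon_idem t : canon (canon t) = canon t.
Proof. apply canon_ext, canon_eqv. Qed.

Definition Iord := { t : tree | canon t = t }.

Definition toI (t : tree) : Iord := exist _ (canon t) (canon_idem t).

Lemma toI_le t : tle t (proj1_sig (toI t)).
Proof. simpl. apply (proj2 (canon_eqv t)). Qed.

Definition rI (x y : Iord) := tlt (proj1_sig x) (proj1_sig y).

Lemma I_eq (x y : Iord) : teqv (proj1_sig x) (proj1_sig y) -> x = y.
Proof.
  destruct x as [x Hx], y as [y Hy]; simpl. intros E. apply canon_ext in E.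
  apply subset_eq_compat. congruence.
Qed.

Lemma rI_tot x y : rI x y \/ x = y \/ rI y x.
Proof.
  unfold rI. destruct (t_total (proj1_sig x) (proj1_sig y)) as [H1|H1]; auto.
  destruct (t_total (proj1_sig y) (proj1_sig x)) as [H2|H2]; auto.
  right; left. apply I_eq. split; auto.
Qed.

Lemma I_seg t : injP (fun s : Iord => tle (proj1_sig s) t) (fun _ : K => True).
Proof.
  induction t as [|g IH].
  - exists (fun _ => k0). split; auto. intros x y Hx Hy _. apply I_eq.
    split; eapply tle_trans; eauto; simpl; auto.
  - set (Phi := fun j => epsilon (inhabits (fun _ : Iord => k0))
        (fun phi => forall x y, tle (proj1_sig x) (g j) -> tle (proj1_sig y) (g j) -> phi x = phi y -> x = y)).
    assert (HPhi : forall j x y, tle (proj1_sig x) (g j) -> tle (proj1_sig y) (g j) -> Phi j x = Phi j y -> x = y).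
    { intros j. unfold Phi.
      apply (epsilon_spec _ (fun phi => forall x y, tle (proj1_sig x) (g j) -> tle (proj1_sig y) (g j) -> phi x = phi y -> x = y)).
      destruct (IH j) as [f [_ f2]]. eauto. }
    set (J := fun s : Iord => epsilon (inhabits k0) (fun j => tle (proj1_sig s) (g j))).
    assert (HJ : forall s, tlt (proj1_sig s) (tsup g) -> tle (proj1_sig s) (g (J s))).
    { intros s Hs. unfold J. apply (epsilon_spec _ (fun j => tle (proj1_sig s) (g j))). exact Hs. }
    assert (Hu : injP (fun s : Iord => tlt (proj1_sig s) (tsup g)) (fun _ : K => True)).
    { exists (fun s => pi (J s) (Phi (J s) s)). split; auto.
      intros x y Hx Hy E. apply pi_inj in E. destruct E as [E1 E2].
      rewrite <- E1 in E2. apply (HPhi (J x)); auto. rewrite E1. auto. }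
    assert (Hu2 := absorb _ _ (toI (tsup g)) h (fun _ => I) h_inj Hu).
    eapply injP_mono; [|intros; exact I|exact Hu2]. simpl.
    intros s Hs. destruct (t_total (tsup g) (proj1_sig s)) as [H|H]; auto.
    right. apply I_eq. simpl. split.
    + eapply tle_trans; [exact Hs|]. apply (proj2 (canon_eqv _)).
    + eapply tle_trans; [apply (proj1 (canon_eqv _))|exact H].
Qed.

Lemma size_I : size_le_kappa_plus K Iord.
Proof.
  exists rI. split; [|split; [|split]].
  - apply (wf_inverse_image _ _ tlt). apply tlt_wf.
  - intros x y z. apply tlt_trans.
  - apply rI_tot.
  - intros i. destruct (I_seg (proj1_sig i)) as [f [_ f2]].
    exists (fun j => f (proj1_sig j)). intros [x Hx] [y Hy] E. simpl in E.
    apply subset_eq_compat. apply f2; auto; apply tlt_tle; auto.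
Qed.


Record St := mkSt { sch : K -> K -> Prop; slf : K -> Prop; slx : K -> K; slv : K -> K }.

Definition lc (S : St) (b : bool) (eta : K -> K) (n : K) : Prop :=
  slf S n /\ (if b then eta (slx S n) = slv S n else eta (slx S n) <> slv S n).

Fixpoint PN (t : tree) (S : St) (b : bool) (eta : K -> K) (n : K) : Prop :=
  match t with
  | tleaf => lc S b eta n
  | tsup f => lc S b eta n \/ (~ slf S n /\
       if b then (forall m, sch S n m -> exists k, PN (f k) S false eta m)
       else (exists m, sch S n m /\ exists k, PN (f k) S true eta m))
  end.

Lemma lc_disj S eta n : lc S true eta n -> lc S false eta n -> False.
Proof. unfold lc. tauto. Qed.

Lemma PN_lc t S b eta n : lc S b eta n -> PN t S b eta n.
Proof. destruct t; simpl; auto. Qed.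

Lemma PN_cases t S b eta n : PN t S b eta n -> lc S b eta n \/
  (exists f, t = tsup f /\ ~ slf S n /\
       if b then (forall m, sch S n m -> exists k, PN (f k) S false eta m)
       else (exists m, sch S n m /\ exists k, PN (f k) S true eta m)).
Proof.
  destruct t as [|f]; simpl; auto. intros [H|H]; auto. right. exists f. auto.
Qed.

Lemma PN_disj S eta : forall t t' n, PN t S true eta n -> PN t' S false eta n -> False.
Proof.
  assert (H : forall t t' n, (PN t S true eta n -> PN t' S false eta n -> False) /\ (PN t' S true eta n -> PN t S false eta n -> False)).
  { induction t as [|f IH]; intros t' n; split; intros H1 H2;
    apply PN_cases in H1; apply PN_cases in H2;
    destruct H1 as [H1|[f1 [E1 [N1 H1]]]]; destruct H2 as [H2|[f2 [E2 [N2 H2]]]];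
    try discriminate; try (unfold lc in *; tauto).
    - injection E1; intros; subst f1.
      destruct H2 as [m [Hm [k Hk]]]. destruct (H1 m Hm) as [k' Hk'].
      exact (proj2 (IH k' (f2 k) m) Hk Hk').
    - injection E2; intros; subst f2.
      destruct H2 as [m [Hm [k Hk]]]. destruct (H1 m Hm) as [k' Hk'].
      exact (proj1 (IH k (f1 k') m) Hk Hk'). }
  intros t t' n. apply (proj1 (H t t' n)).
Qed.

Lemma PN_mono S eta : forall s t b n, tle s t -> PN s S b eta n -> PN t S b eta n.
Proof.
  induction s as [|f IH]; intros t b n Hle Hs.
  - apply PN_lc. exact Hs.
  - apply PN_cases in Hs. destruct Hs as [Hs|[f1 [E [N Hs]]]]; [apply PN_lc; auto|].
    injection E; intros; subst f1.
    destruct t as [|g]. { exfalso. exact (Hle k0). }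
    simpl. right. split; auto. destruct b.
    + intros m Hm. destruct (Hs m Hm) as [k Hk]. destruct (Hle k) as [j Hj].
      exists j. eauto.
    + destruct Hs as [m [Hm [k Hk]]]. destruct (Hle k) as [j Hj].
      exists m. split; auto. exists j. eauto.
Qed.

Definition nodemap (S S' : St) (phi : K -> K) :=
  (forall a, slf S' (phi a) <-> slf S a) /\ (forall a, slx S' (phi a) = slx S a) /\ (forall a, slv S' (phi a) = slv S a) /\ (forall a m, sch S' (phi a) m <-> exists b, m = phi b /\ sch S a b).

Lemma PN_nodemap S S' phi : nodemap S S' phi ->
  forall t b eta a, PN t S' b eta (phi a) <-> PN t S b eta a.
Proof.
  intros [H1 [H2 [H3 H4]]].
  assert (Hlc : forall b eta a, lc S' b eta (phi a) <-> lc S b eta a).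
  { intros b eta a. unfold lc. rewrite H1, H2, H3. tauto. }
  induction t as [|f IH]; intros b eta a; simpl; [apply Hlc|].
  rewrite Hlc, H1. destruct b.
  - split; intros [A|[A B]]; auto; right; split; auto.
    + intros m Hm. destruct (B (phi m)) as [k Hk]. { apply H4. eauto. }
      exists k. apply IH. auto.
    + intros m Hm. apply H4 in Hm. destruct Hm as [b' [E Hb]]. subst m.
      destruct (B b' Hb) as [k Hk]. exists k. apply IH. auto.
  - split; intros [A|[A B]]; auto; right; split; auto.
    + destruct B as [m [Hm [k Hk]]]. apply H4 in Hm. destruct Hm as [b' [E Hb]]. subst m.
      exists b'. split; auto. exists k. apply IH. auto.
    + destruct B as [m [Hm [k Hk]]]. exists (phi m). split. { apply H4. eauto. }
      exists k. apply IH. auto.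
Qed.


Definition Borel2 (P : (K -> K) * (K -> K) -> Prop) :=
  borel (@basic_open2 K) (size_le_kappa_plus K) P.

Lemma h_neq i j : i <> j -> h i <> h j.
Proof. intros H E. apply H. apply h_inj. exact E. Qed.

Lemma sz_of_inj (I : Type) (f : I -> K) : inj f -> size_le_kappa_plus K I.
Proof.
  intros Hf. exists (fun x y => lt (f x) (f y)). split; [|split; [|split]].
  - apply (wf_inverse_image _ _ lt). apply (rc_wf HK).
  - intros x y z. apply (rc_trans HK).
  - intros x y. destruct (rc_total HK (f x) (f y)) as [H|[H|H]]; auto.
  - intros i. exists (fun j => f (proj1_sig j)). intros [x Hx] [y Hy] E. simpl in E.
    apply subset_eq_compat. apply Hf; auto.
Qed.

Lemma small_empty : small (fun _ : K => False).
Proof. intros [f _]. destruct (f k0). contradiction. Qed.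

Lemma small_single a : small (fun x : K => x = a).
Proof.
  intros [f Hf]. assert (E : f (h 0) = f (h 1)).
  { destruct (f (h 0)) as [x Hx], (f (h 1)) as [y Hy]. apply subset_eq_compat. congruence. }
  apply Hf in E. apply h_inj in E. discriminate.
Qed.

Lemma basic_full : basic_open (fun _ : K -> K => True).
Proof.
  right. exists (fun _ => False), (fun x => x). split; [apply small_empty|].
  intros z. split; auto. intros _ x [].
Qed.

Lemma basic_pt x v : basic_open (fun z : K -> K => z x = v).
Proof.
  right. exists (fun y => y = x), (fun _ => v). split; [apply small_single|].
  intros z. split; [intros H y E; subst; auto|intros H; apply H; auto].
Qed.

Lemma B_ext P Q : Borel2 P -> (forall q, P q <-> Q q) -> Borel2 Q.
Proof. intros. eapply borel_ext; eauto. Qed.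

Lemma B_snd p v : Borel2 (fun q => snd q p = v).
Proof.
  apply borel_basic. exists (fun _ => True), (fun z => z p = v).
  split; [apply basic_full|split; [apply basic_pt|]]. intros q. tauto.
Qed.

Lemma B_fst x v : Borel2 (fun q => fst q x = v).
Proof.
  apply borel_basic. exists (fun z => z x = v), (fun _ => True).
  split; [apply basic_pt|split; [apply basic_full|]]. intros q. tauto.
Qed.

Lemma sz_bool : size_le_kappa_plus K bool.
Proof.
  apply (sz_of_inj bool (fun b => if b then h 0 else h 1)).
  intros [|] [|] E; auto; apply h_inj in E; discriminate.
Qed.

Lemma sz_K : size_le_kappa_plus K K.
Proof. apply (sz_of_inj K (fun x => x)). intros x y E; auto. Qed.

Lemma B_and P Q : Borel2 P -> Borel2 Q -> Borel2 (fun q => P q /\ Q q).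
Proof.
  intros HP HQ. apply (B_ext (fun q => forall b : bool, (if b then P else Q) q)).
  - apply borel_inter; [apply sz_bool|]. intros [|]; auto.
  - intros q. split; [intros H; exact (conj (H true) (H false))|intros [H1 H2] [|]; auto].
Qed.

Lemma B_or P Q : Borel2 P -> Borel2 Q -> Borel2 (fun q => P q \/ Q q).
Proof.
  intros HP HQ. apply (B_ext (fun q => exists b : bool, (if b then P else Q) q)).
  - apply borel_union; [apply sz_bool|]. intros [|]; auto.
  - intros q. split; [intros [[|] H]; auto|intros [H|H]; [exists true|exists false]; auto].
Qed.

Lemma B_not P : Borel2 P -> Borel2 (fun q => ~ P q).
Proof. intros. apply borel_compl. auto. Qed.

Lemma B_all (F : K -> (K -> K) * (K -> K) -> Prop) :
  (forall k, Borel2 (F k)) -> Borel2 (fun q => forall k, F k q).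
Proof. intros. apply borel_inter; [apply sz_K|auto]. Qed.

Lemma B_ex (F : K -> (K -> K) * (K -> K) -> Prop) :
  (forall k, Borel2 (F k)) -> Borel2 (fun q => exists k, F k q).
Proof. intros. apply borel_union; [apply sz_K|auto]. Qed.

Lemma B_imp P Q : Borel2 P -> Borel2 Q -> Borel2 (fun q => P q -> Q q).
Proof.
  intros HP HQ. apply (B_ext (fun q => ~ P q \/ Q q)).
  - apply B_or; [apply B_not|]; auto.
  - intros q. tauto.
Qed.

Let t0 := h 0.
Let t1 := h 1.
Let t2 := h 2.
Let t3 := h 3.
Let z := h 0.

Definition stOf (xi : K -> K) : St :=
  mkSt (fun n m => xi (pi t0 (pi n m)) = z) (fun n => xi (pi t1 n) = z)
       (fun n => xi (pi t2 n)) (fun n => xi (pi t3 n)).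

Lemma B_sat n : Borel2 (fun q => fst q (snd q (pi t2 n)) = snd q (pi t3 n)).
Proof.
  apply (B_ext (fun q => exists x v, snd q (pi t2 n) = x /\ snd q (pi t3 n) = v /\ fst q x = v)).
  - apply B_ex; intros x. apply B_ex; intros v.
    apply B_and; [apply B_snd|apply B_and; [apply B_snd|apply B_fst]].
  - intros q. split; [intros [x [v [E1 [E2 E3]]]]; subst; auto|intros E; eauto].
Qed.

Lemma B_lc b n : Borel2 (fun q => lc (stOf (snd q)) b (fst q) n).
Proof.
  unfold lc; simpl. apply B_and; [apply B_snd|]. destruct b; [apply B_sat|].
  apply B_not. apply B_sat.
Qed.

Lemma B_PN t : forall b n, Borel2 (fun q => PN t (stOf (snd q)) b (fst q) n).
Proof.
  induction t as [|f IH]; intros b n; simpl; [apply B_lc|].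
  apply B_or; [apply B_lc|]. apply B_and; [apply B_not; apply B_snd|]. destruct b.
  - apply B_all; intros m. apply B_imp; [apply B_snd|]. apply B_ex; intros k. apply IH.
  - apply B_ex; intros m. apply B_and; [apply B_snd|]. apply B_ex; intros k. apply IH.
Qed.

Definition R0 := pi t1 t0.

Definition Runiv (q : (K -> K) * (K -> K)) : Prop :=
  exists i : Iord, PN (proj1_sig i) (stOf (snd q)) true (fst q) R0.

Lemma B_Runiv : kappa_kappa_plus_borel2 Runiv.
Proof.
  unfold kappa_kappa_plus_borel2, Runiv.
  apply (@borel_union _ _ _ Iord (fun i q => PN (proj1_sig i) (stOf (snd q)) true (fst q) R0)).
  - apply size_I.
  - intros i. apply B_PN.
Qed.


Inductive bc := bleaf (x v : K) | bnor (P : K -> Prop) (f : K -> bc).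

Fixpoint ev (c : bc) (eta : K -> K) : Prop :=
  match c with
  | bleaf x v => eta x = v
  | bnor P f => forall k, P k -> ~ ev (f k) eta
  end.

Lemma code_family (I : Type) (F : I -> (K -> K) -> Prop) (g : I -> K) : inj g ->
  (forall i, exists c, forall eta, F i eta <-> ev c eta) ->
  exists cF : K -> bc, forall i eta, F i eta <-> ev (cF (g i)) eta.
Proof.
  intros Hg IH.
  exists (fun k => epsilon (inhabits (bleaf k0 k0)) (fun c => exists i, g i = k /\ forall eta, F i eta <-> ev c eta)).
  intros i.
  destruct (epsilon_spec (inhabits (bleaf k0 k0)) (fun c => exists i', g i' = g i /\ forall eta, F i' eta <-> ev c eta))
    as [i' [E H]].
  { destruct (IH i) as [c Hc]. exists c, i. auto. }
  apply Hg in E. subst i'. exact H.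
Qed.

Lemma code_exists A : kappa_borel A -> exists c, forall eta, A eta <-> ev c eta.
Proof.
  unfold kappa_borel. intros HA. induction HA as [A HA|A B HA IH HAB|A HA IH|I F HI HF IH|I F HI HF IH].
  - destruct HA as [H0|[X [e [Hs HX]]]].
    + exists (bnor (fun _ => True) (fun _ => bnor (fun _ => False) (fun _ => bleaf k0 k0))).
      intros eta. simpl. split; [intros H; exfalso; exact (H0 _ H)|].
      intros H. exfalso. apply (H k0 I). intros k [].
    + exists (bnor X (fun x => bnor (fun k => k = x) (fun _ => bleaf x (e x)))).
      intros eta. rewrite HX. simpl. split.
      * intros H x Hx Hn. apply (Hn x eq_refl). auto.
      * intros H x Hx. apply NNPP. intros Hn. apply (H x Hx). intros k _. auto.
  - destruct IH as [c Hc]. exists c. intros eta. rewrite <- HAB. auto.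
  - destruct IH as [c Hc]. exists (bnor (fun k => k = k0) (fun _ => c)).
    intros eta. simpl. rewrite Hc. split.
    + intros H k _. auto.
    + intros H. exact (H k0 eq_refl).
  - destruct HI as [g Hg]. destruct (code_family I F g Hg IH) as [cF HcF].
    exists (bnor (fun k => k = k0) (fun _ => bnor (fun k => exists i, g i = k) cF)).
    intros eta. simpl. split.
    + intros [i Hi] k _ Hn. apply (Hn (g i)); eauto. apply HcF. auto.
    + intros H. apply NNPP. intros Hn. apply (H k0 eq_refl).
      intros k [i Hi] Hc. subst k. apply Hn. exists i. apply HcF. auto.
  - destruct HI as [g Hg]. destruct (code_family I F g Hg IH) as [cF HcF].
    exists (bnor (fun k => exists i, g i = k) (fun k => bnor (fun k' => k' = k0) (fun _ => cF k))).
    intros eta. simpl. split.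
    + intros H k [i Hi] Hn. subst k. apply (Hn k0 eq_refl). apply HcF. auto.
    + intros H i. apply HcF. apply NNPP. intros Hn. apply (H (g i)); eauto.
Qed.

Definition cn (k a : K) := pi t0 (pi k a).

Definition unp (n : K) : K * K := epsilon (inhabits (k0, k0)) (fun p => n = cn (fst p) (snd p)).

Lemma cn_inj k a k' a' : cn k a = cn k' a' -> k = k' /\ a = a'.
Proof. unfold cn. intros E. apply pi_inj in E. destruct E as [_ E]. apply pi_inj in E. auto. Qed.

Lemma unp_cn k a : unp (cn k a) = (k, a).
Proof.
  unfold unp. set (p := epsilon _ _).
  assert (E : cn k a = cn (fst p) (snd p)).
  { apply (epsilon_spec _ (fun p => cn k a = cn (fst p) (snd p))). exists (k, a). reflexivity. }
  apply cn_inj in E. destruct E as [E1 E2]. rewrite E1, E2. destruct p; reflexivity.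
Qed.

Fixpoint emb (c : bc) : St :=
  match c with
  | bleaf x v => mkSt (fun _ _ => False) (fun n => n = R0) (fun _ => x) (fun _ => v)
  | bnor P f => mkSt
      (fun n m => (n = R0 /\ exists k, P k /\ m = cn k R0) \/
                  (exists k a b, n = cn k a /\ m = cn k b /\ sch (emb (f k)) a b))
      (fun n => exists k a, n = cn k a /\ slf (emb (f k)) a)
      (fun n => slx (emb (f (fst (unp n)))) (snd (unp n)))
      (fun n => slv (emb (f (fst (unp n)))) (snd (unp n)))
  end.

Lemma R0_cn k a : R0 <> cn k a.
Proof. unfold R0, cn. intros E. apply pi_inj in E. destruct E as [E _]. apply h_inj in E. discriminate. Qed.

Lemma emb_nodemap P f k : nodemap (emb (f k)) (emb (bnor P f)) (cn k).
Proof.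
  split; [|split; [|split]]; simpl.
  - intros a. split.
    + intros [k' [a' [E H]]]. apply cn_inj in E. destruct E; subst; auto.
    + intros H. exists k, a. auto.
  - intros a. rewrite unp_cn. reflexivity.
  - intros a. rewrite unp_cn. reflexivity.
  - intros a m. split.
    + intros [[E _]|[k' [a' [b [E1 [E2 H]]]]]].
      * exfalso. apply (R0_cn k a). auto.
      * apply cn_inj in E1. destruct E1; subst. eauto.
    + intros [b [E H]]. right. exists k, a, b. auto.
Qed.

Lemma rank_exists c : exists t, forall eta,
  (ev c eta -> PN t (emb c) true eta R0) /\ (~ ev c eta -> PN t (emb c) false eta R0).
Proof.
  induction c as [x v|P f IH].
  - exists tleaf. intros eta. simpl. unfold lc; simpl. tauto.
  - set (tk := fun k => epsilon (inhabits tleaf) (fun t => forall eta,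
      (ev (f k) eta -> PN t (emb (f k)) true eta R0) /\ (~ ev (f k) eta -> PN t (emb (f k)) false eta R0))).
    assert (Htk : forall k eta,
      (ev (f k) eta -> PN (tk k) (emb (f k)) true eta R0) /\ (~ ev (f k) eta -> PN (tk k) (emb (f k)) false eta R0)).
    { intros k. unfold tk. apply (epsilon_spec _ (fun t => forall eta,
      (ev (f k) eta -> PN t (emb (f k)) true eta R0) /\ (~ ev (f k) eta -> PN t (emb (f k)) false eta R0))).
      apply IH. }
    assert (Hroot : ~ slf (emb (bnor P f)) R0).
    { simpl. intros [k [a [E _]]]. exact (R0_cn k a E). }
    exists (tsup tk). intros eta. split; intros Hev; simpl; right; (split; [exact Hroot|]).
    + intros m [[_ [k [Pk E]]]|[k [a [b [E _]]]]].
      * subst m. exists k. apply (PN_nodemap _ _ _ (emb_nodemap P f k)).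
        apply (proj2 (Htk k eta)). apply (Hev k Pk).
      * exfalso. exact (R0_cn k a E).
    + simpl in Hev. apply not_all_ex_not in Hev. destruct Hev as [k Hk].
      assert (Pk : P k) by tauto. assert (Ek : ev (f k) eta) by tauto.
      exists (cn k R0). split; [left; split; eauto|].
      exists k. apply (PN_nodemap _ _ _ (emb_nodemap P f k)).
      apply (proj1 (Htk k eta)). exact Ek.
Qed.


Definition xspec (S : St) (p v : K) : Prop :=
  (forall n m, p = pi t0 (pi n m) -> (v = z <-> sch S n m)) /\
  (forall n, p = pi t1 n -> (v = z <-> slf S n)) /\
  (forall n, p = pi t2 n -> v = slx S n) /\
  (forall n, p = pi t3 n -> v = slv S n).

Lemma tag_neq i j a b : i <> j -> pi (h i) a <> pi (h j) b.
Proof. intros H E. apply pi_inj in E. destruct E as [E _]. apply h_inj in E. auto. Qed.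

Lemma xspec_ex S p : exists v, xspec S p v.
Proof.
  unfold xspec.
  destruct (classic (exists n m, p = pi t0 (pi n m))) as [[n [m E]]|N0].
  { exists (if excluded_middle_informative (sch S n m) then z else h 1). subst p.
    split; [|split; [|split]]; intros.
    - apply pi_inj in H. destruct H as [_ H]. apply pi_inj in H. destruct H; subst.
      destruct excluded_middle_informative; split; auto; try tauto.
      intros E. apply h_inj in E. discriminate.
    - exfalso. exact (tag_neq 0 1 _ _ ltac:(lia) H).
    - exfalso. exact (tag_neq 0 2 _ _ ltac:(lia) H).
    - exfalso. exact (tag_neq 0 3 _ _ ltac:(lia) H). }
  destruct (classic (exists n, p = pi t1 n)) as [[n E]|N1].
  { exists (if excluded_middle_informative (slf S n) then z else h 1). subst p.
    split; [|split; [|split]]; intros.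
    - exfalso. exact (tag_neq 1 0 _ _ ltac:(lia) H).
    - apply pi_inj in H. destruct H; subst.
      destruct excluded_middle_informative; split; auto; try tauto.
      intros E. apply h_inj in E. discriminate.
    - exfalso. exact (tag_neq 1 2 _ _ ltac:(lia) H).
    - exfalso. exact (tag_neq 1 3 _ _ ltac:(lia) H). }
  destruct (classic (exists n, p = pi t2 n)) as [[n E]|N2].
  { exists (slx S n). subst p.
    split; [|split; [|split]]; intros.
    - exfalso. exact (tag_neq 2 0 _ _ ltac:(lia) H).
    - exfalso. exact (tag_neq 2 1 _ _ ltac:(lia) H).
    - apply pi_inj in H. destruct H; subst. auto.
    - exfalso. exact (tag_neq 2 3 _ _ ltac:(lia) H). }
  destruct (classic (exists n, p = pi t3 n)) as [[n E]|N3].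
  { exists (slv S n). subst p.
    split; [|split; [|split]]; intros.
    - exfalso. exact (tag_neq 3 0 _ _ ltac:(lia) H).
    - exfalso. exact (tag_neq 3 1 _ _ ltac:(lia) H).
    - exfalso. exact (tag_neq 3 2 _ _ ltac:(lia) H).
    - apply pi_inj in H. destruct H; subst. auto. }
  exists z. split; [|split; [|split]]; intros; exfalso; eauto.
Qed.

Definition xiOf (S : St) : K -> K := fun p => epsilon (inhabits k0) (xspec S p).

Lemma xiOf_spec S p : xspec S p (xiOf S p).
Proof. unfold xiOf. apply epsilon_spec. apply xspec_ex. Qed.

Lemma xiOf_nodemap S : nodemap S (stOf (xiOf S)) (fun a => a).
Proof.
  split; [|split; [|split]]; simpl.
  - intros a. destruct (xiOf_spec S (pi t1 a)) as [_ [H _]]. apply H. reflexivity.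
  - intros a. destruct (xiOf_spec S (pi t2 a)) as [_ [_ [H _]]]. apply H. reflexivity.
  - intros a. destruct (xiOf_spec S (pi t3 a)) as [_ [_ [_ H]]]. apply H. reflexivity.
  - intros a m. destruct (xiOf_spec S (pi t0 (pi a m))) as [H _].
    rewrite (H a m eq_refl). split; [eauto|intros [b [E Hb]]; subst; auto].
Qed.

Lemma universal A : kappa_borel A -> exists xi, forall eta, A eta <-> Runiv (eta, xi).
Proof.
  intros HA. destruct (code_exists A HA) as [c Hc]. destruct (rank_exists c) as [t Ht].
  exists (xiOf (emb c)). intros eta. unfold Runiv; simpl.
  pose proof (PN_nodemap _ _ _ (xiOf_nodemap (emb c))) as Hn. simpl in Hn.
  split.
  - intros Ha. exists (toI t). apply Hn. apply (PN_mono _ _ t); [apply toI_le|].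
    apply (proj1 (Ht eta)). apply Hc. auto.
  - intros [i Hi]. apply Hn in Hi. apply Hc. apply NNPP. intros Hne.
    apply (PN_disj _ _ _ _ _ Hi (proj2 (Ht eta) Hne)).
Qed.

End Main.

Theorem theorem3p18 (K : Type) (lt : K -> K -> Prop) (HK : regular_cardinal lt) :
  exists R : (K -> K) * (K -> K) -> Prop,
    kappa_kappa_plus_borel2 R /\
    forall A : (K -> K) -> Prop, kappa_borel A ->
      exists xi : K -> K, forall eta : K -> K, A eta <-> R (eta, xi).
Proof.
  destruct (pairing K lt HK) as [pi Hpi].
  destruct (rc_infinite HK) as [h hinj].
  exists (Runiv K pi h). split.
  - apply (B_Runiv K lt HK pi Hpi h hinj).
  - intros A HA. apply (universal K pi Hpi h hinj A HA).
Qed.
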